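(* Let $n\ge 4$, $Q=\{0,\dots,n-1\}$, and let $X_n$ be a transition semigroup of maximum cardinality among transition semigroups of minimal complete DFAs with state set $Q$, initial state $0$ and empty state $n-1$ accepting suffix-free languages. If $X_n\neq\mathbf{V}_{\mathrm{sf}}(n)$ and $X_n\neq\mathbf{W}_{\mathrm{sf}}(n)$, then $X_n$ contains no pair of conflicting transformations.
   Context: A language $L$ is suffix-free if whenever $w\in L$ and $u\in L$ with $u$ a suffix of $w$, then $u=w$. Transformations act on the right ($qt$ is the image of $q$ under $t$). The transition semigroup of a DFA is the semigroup of transformations of its state set generated by the transformations induced by its letters. For a semigroup $T$ of transformations of $Q$: an unordered pair $\{p,q\}$ of distinct states of $Q\setminus\{0,n-1\}$ is colliding in $T$ if there exist $t\in T$ and $r\in Q\setminus\{0,n-1\}$ with $0t=p$ and $rt=q$; the pair is focused by a transformation $u$ if $pu=qu=r$ for some $r\notin\{0,n-1\}$. Define $\mathbf{B}_{\mathrm{sf}}(n)=\{t:Q\to Q \mid 0\notin Qt,\ (n-1)t=n-1,\ \text{and for all } j\ge1:\ 0t^j=n-1 \text{ or } 0t^j\neq qt^j \text{ for all } 0<q<n-1\}$, $\mathbf{V}_{\mathrm{sf}}(n)=\{t\in\mathbf{B}_{\mathrm{sf}}(n)\mid \text{for all } p\neq q \text{ in } Q:\ pt=qt=n-1 \text{ or } pt\neq qt\}$, and $\mathbf{W}_{\mathrm{sf}}(n)=\{t\in\mathbf{B}_{\mathrm{sf}}(n)\mid 0t=n-1 \text{ or } qt=n-1 \text{ for all } 1\le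 q\le n-2\}$. Two transformations $t,t'\in\mathbf{B}_{\mathrm{sf}}(n)$ conflict if, whenever $t$ and $t'$ both belong to the transition semigroup of a DFA $\mathcal{D}$ (state set $Q$, initial state $0$), at least one of the following holds: (1) the language accepted by $\mathcal{D}$ is not suffix-free; (2) every two states from $\{1,\dots,n-2\}$ are colliding in that semigroup; (3) every two states from $\{1,\dots,n-2\}$ are focused by some transformation of that semigroup. *)

(* Defs.v *)
From mathcomp Require Import all_boot.
From mathcomp Require Import boolp.

Set Implicit Arguments.
Unset Strict Implicit.
Unset Printing Implicit Defensive.

(* States Q = {0,...,n-1} are 'I_n; the initial state is the state of value 0
   and the empty state is the state of value n-1. Transformations of Q are
   {ffun 'I_n -> 'I_n}, acting on the right: (q t) is written [t q]. *)

Definition is_init {n} (q : 'I_n) : bool := val q == 0.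
Definition is_last {n} (q : 'I_n) : bool := val q == n.-1.
Definition inner {n} (q : 'I_n) : bool := (0 < val q) && (val q < n.-1).

Record dfa (n : nat) := DFA {
  nletters : nat;
  delta : 'I_nletters -> {ffun 'I_n -> 'I_n};
  final : {set 'I_n} }.

Definition run {n} (D : dfa n) (w : seq 'I_(nletters D)) (q : 'I_n) : 'I_n :=
  foldl (fun p a => @delta n D a p) q w.
Arguments run {n} D w q.

Definition word_trans {n} (D : dfa n) (w : seq 'I_(nletters D))
  : {ffun 'I_n -> 'I_n} := [ffun q => run D w q].

Arguments word_trans {n} D w.

Definition accepts {n} (D : dfa n) (w : seq 'I_(nletters D)) : bool :=
  [exists p, is_init p && (run D w p \in final D)].

Arguments accepts {n} D w.

Definition suffix_free {n} (D : dfa n) : Prop :=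
  forall w u, accepts D w -> accepts D u -> suffix u w -> u = w.

Definition tsg {n} (D : dfa n) : {set {ffun 'I_n -> 'I_n}} :=
  [set t | `[< exists w, w != [::] /\ word_trans D w = t >]].

Definition minimal_dfa {n} (D : dfa n) : Prop :=
  (forall p q : 'I_n, is_init p -> exists w, run D w p = q) /\
  (forall p q : 'I_n, p != q ->
     exists w, (run D w p \in final D) != (run D w q \in final D)).

Definition last_is_empty {n} (D : dfa n) : Prop :=
  forall q : 'I_n, is_last q -> forall w, run D w q \notin final D.

Definition sf_class {n} (D : dfa n) : Prop :=
  minimal_dfa D /\ last_is_empty D /\ suffix_free D.

Definition inB {n} (t : {ffun 'I_n -> 'I_n}) : Prop :=
  (forall q, ~~ is_init (t q)) /\
  (forall q, is_last q -> t q = q) /\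
  (forall j, 1 <= j -> forall p q : 'I_n, is_init p -> inner q ->
     is_last (iter j t p) \/ iter j t p <> iter j t q).

Definition inV {n} (t : {ffun 'I_n -> 'I_n}) : Prop :=
  inB t /\ forall p q : 'I_n, p != q ->
     (is_last (t p) /\ is_last (t q)) \/ t p <> t q.

Definition inW {n} (t : {ffun 'I_n -> 'I_n}) : Prop :=
  inB t /\ ((forall p : 'I_n, is_init p -> is_last (t p)) \/
            (forall q : 'I_n, inner q -> is_last (t q))).

Definition Bsf n : {set {ffun 'I_n -> 'I_n}} := [set t | `[< inB t >]].
Definition Vsf n : {set {ffun 'I_n -> 'I_n}} := [set t | `[< inV t >]].
Definition Wsf n : {set {ffun 'I_n -> 'I_n}} := [set t | `[< inW t >]].

Definition colliding {n} (T : {set {ffun 'I_n -> 'I_n}}) (p q : 'I_n) : Prop :=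
  exists2 t, t \in T & exists r, inner r /\ exists p0, is_init p0 /\
    ((t p0 = p /\ t r = q) \/ (t p0 = q /\ t r = p)).

Definition focused {n} (u : {ffun 'I_n -> 'I_n}) (p q : 'I_n) : Prop :=
  exists r, inner r /\ u p = r /\ u q = r.

Definition all_colliding {n} (T : {set {ffun 'I_n -> 'I_n}}) : Prop :=
  forall p q : 'I_n, inner p -> inner q -> p != q -> colliding T p q.

Definition all_focused {n} (T : {set {ffun 'I_n -> 'I_n}}) : Prop :=
  forall p q : 'I_n, inner p -> inner q -> p != q ->
    exists2 u, u \in T & focused u p q.

Definition conflict {n} (t t' : {ffun 'I_n -> 'I_n}) : Prop :=
  inB t /\ inB t' /\
  forall D : dfa n, t \in tsg D -> t' \in tsg D ->
    ~ suffix_free D \/ all_colliding (tsg D) \/ all_focused (tsg D).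

(* Main.v *)
Require Import Defs.
From mathcomp Require Import all_boot.
From mathcomp Require Import boolp.

Set Implicit Arguments.
Unset Strict Implicit.
Unset Printing Implicit Defensive.

Lemma run_cat n (D : dfa n) x y q : run D (x ++ y) q = run D y (run D x q).
Proof. by rewrite /run foldl_cat. Qed.

Lemma run_cons n (D : dfa n) a w q : run D (a :: w) q = run D w (delta a q).
Proof. by []. Qed.

Lemma wtE n (D : dfa n) w q : word_trans D w q = run D w q.
Proof. by rewrite /word_trans ffunE. Qed.

Lemma iter_wt n (D : dfa n) w j q :
  iter j (word_trans D w) q = run D (flatten (nseq j w)) q.
Proof.
elim: j q => [|j IH] q //.
by rewrite iterSr IH /= run_cat wtE.
Qed.

Lemma init0 m (p : 'I_m.+4) : is_init p -> p = ord0.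
Proof. by move=> /eqP h; apply: val_inj. Qed.

Lemma is_init0 m : is_init (@ord0 m.+3). Proof. by []. Qed.
Lemma is_last_max m : is_last (@ord_max m.+3).
Proof. by rewrite /is_last /= eqxx. Qed.

Lemma lastM m (p : 'I_m.+4) : is_last p -> p = ord_max.
Proof. by move=> /eqP h; apply: val_inj. Qed.

Lemma state_cases m (q : 'I_m.+4) : [\/ is_init q, inner q | is_last q].
Proof.
rewrite /is_init /inner /is_last /=.
have := ltn_ord q.
case: (val q) => [|k] /=; first by constructor 1.
move=> h; case: (ltnP k.+1 m.+3) => h2; first by constructor 2.
by constructor 3; apply/eqP; apply/eqP; rewrite eqn_leq h2 -ltnS h.
Qed.

Lemma tsgP n (D : dfa n) t : t \in tsg D -> exists w, w != [::] /\ word_trans D w = t.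
Proof. by rewrite inE => /asboolP. Qed.

Lemma reach m (D : dfa m.+4) : minimal_dfa D -> forall q, exists w, run D w ord0 = q.
Proof. by case=> h _ q; apply: h. Qed.

Lemma sf_key m (D : dfa m.+4) : sf_class D -> forall x u,
  run D (x ++ u) ord0 = run D u ord0 -> ~~ is_last (run D u ord0) -> x = [::].
Proof.
case=> [[Hr Hd] [He Hs]] x u Heq Hnl.
move: Heq Hnl; move Er: (run D u ord0) => r Heq Hnl.
have rn : r != ord_max.
  apply/negP => /eqP e; move: Hnl; by rewrite e /is_last /= eqxx.
have [v Hv] := Hd _ _ rn.
have Hl : run D v ord_max \notin final D by apply: He; rewrite /is_last /= eqxx.
have Hrv : run D v r \in final D.
  by move: Hv; rewrite (negbTE Hl); case: (run D v r \in final D).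
have A1 : accepts D (x ++ (u ++ v)).
  by apply/existsP; exists ord0; rewrite is_init0 /= catA run_cat Heq.
have A2 : accepts D (u ++ v).
  by apply/existsP; exists ord0; rewrite is_init0 /= run_cat Er.
have := Hs _ _ A1 A2 (suffix_suffix _ _).
move/(congr1 size); rewrite !size_cat => /eqP.
by rewrite -{1}[size u + size v]add0n eqn_add2r eq_sym size_eq0 => /eqP.
Qed.

Lemma inner_nz m (q : 'I_m.+4) : inner q -> q != ord0.
Proof. by case/andP=> h _; apply/eqP=> e; rewrite e in h. Qed.

Lemma tsg_inB m (D : dfa m.+4) t : sf_class D -> t \in tsg D -> inB t.
Proof.
move=> Hsf /tsgP [w [wn <-]].
have Hsf' := Hsf; case: Hsf' => [[Hr Hd] [He Hs]].
split; [|split].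
- move=> q; apply/negP => hi.
  have [x Hx] := reach (proj1 Hsf) q.
  have := @sf_key m D Hsf (x ++ w) [::].
  rewrite cats0 run_cat Hx -wtE (init0 hi) /= => /(_ erefl isT).
  by case: (x) => [|a x'] //= e; rewrite e in wn.
- move=> q hq; apply/eqP; apply/negPn/negP => hne.
  have hne' : q != word_trans D w q by rewrite eq_sym.
  have [v Hv] := Hd _ _ hne'.
  move: Hv; rewrite wtE -run_cat.
  by rewrite (negbTE (He _ hq v)) (negbTE (He _ hq (w ++ v))).
- move=> j hj p q hp hq.
  case: (boolP (is_last (iter j (word_trans D w) p))) => hl; [by left|right] => e.
  rewrite (init0 hp) in hl e.
  have [x Hx] := reach (proj1 Hsf) q.
  move: e hl; rewrite !iter_wt -Hx -run_cat => e hl.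
  have x0 := sf_key Hsf (esym e) hl.
  by move: Hx; rewrite x0 /= => Hx; move: (inner_nz hq); rewrite -Hx eqxx.
Qed.

Lemma focus_contra m (D : dfa m.+4) t u r c : sf_class D -> t \in tsg D -> u \in tsg D ->
  inner r -> inner c -> u (t ord0) = c -> u (t r) = c -> False.
Proof.
move=> Hsf /tsgP [w [_ <-]] /tsgP [w' [_ <-]] hr hc e1 e2.
have [x Hx] := reach (proj1 Hsf) r.
have hcl : ~~ is_last c by case/andP: hc => _; rewrite /is_last; apply: contraL => /eqP ->; rewrite ltnn.
have := @sf_key m D Hsf x (w ++ w').
rewrite catA !run_cat Hx -!wtE e1 e2 => /(_ erefl hcl) x0.
by move: Hx (inner_nz hr); rewrite x0 /= => ->; rewrite eqxx.
Qed.

Lemma inner_of m (q : 'I_m.+4) : ~~ is_init q -> ~~ is_last q -> inner q.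
Proof.
by case: (state_cases q) => h; rewrite h.
Qed.

Lemma B1 m (t : {ffun 'I_m.+4 -> 'I_m.+4}) q : inB t -> inner q ->
  is_last (t ord0) \/ t ord0 <> t q.
Proof. by case=> _ [_ h] hq; apply: (h 1 isT). Qed.

Lemma coll_subV m (X : {set {ffun 'I_m.+4 -> 'I_m.+4}}) D : sf_class D -> tsg D = X ->
  all_colliding X -> X \subset Vsf m.+4.
Proof.
move=> Hsf HX Hc; apply/subsetP => t tX; rewrite inE; apply/asboolP.
have tB : inB t by apply: (tsg_inB Hsf); rewrite HX.
split=> // p q pq.
case: (eqVneq (t p) (t q)) => e; last by right; apply/eqP.
case: (boolP (is_last (t p))) => hl; first by left; rewrite -e.
exfalso.
have tl : forall x, is_last x -> t x = x by case: tB => _ [h _].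
have ti : forall x, ~~ is_init (t x) by case: tB.
case: (state_cases p) => hp.
- rewrite (init0 hp) in e hl pq.
  case: (state_cases q) => hq.
  + by rewrite (init0 hq) eqxx in pq.
  + by case: (B1 tB hq) => //; rewrite (negbTE hl).
  + by move: hl; rewrite e (tl _ hq) hq.
- case: (state_cases q) => hq.
  + rewrite (init0 hq) in e.
    by case: (B1 tB hp); [rewrite -e (negbTE hl) | apply; rewrite e].
  + have [t' t'X [r [hr [p0 [hp0 H]]]]] := Hc p q hp hq pq.
    rewrite (init0 hp0) in H.
    have hs : inner (t p) by apply: inner_of.
    rewrite -HX in t'X tX.
    case: H => [[e1 e2]|[e1 e2]].
    * by apply: (focus_contra Hsf t'X tX hr hs); rewrite ?e1 ?e2.
    * by apply: (focus_contra Hsf t'X tX hr hs); rewrite ?e1 ?e2.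
  + by move: hl; rewrite e (tl _ hq) hq.
- by move: hl; rewrite (tl _ hp) hp.
Qed.

Lemma foc_subW m (X : {set {ffun 'I_m.+4 -> 'I_m.+4}}) D : sf_class D -> tsg D = X ->
  all_focused X -> X \subset Wsf m.+4.
Proof.
move=> Hsf HX Hf; apply/subsetP => t tX; rewrite inE; apply/asboolP.
have tB : inB t by apply: (tsg_inB Hsf); rewrite HX.
have ti : forall x, ~~ is_init (t x) by case: tB.
split=> //.
case: (boolP (is_last (t ord0))) => h0.
  by left=> p hp; rewrite (init0 hp).
right=> q hq; apply/negPn/negP => hl.
have hne : t ord0 != t q by case: (B1 tB hq) => [|/eqP]; rewrite ?(negbTE h0).
have [u uX [r [hr [e1 e2]]]] := Hf _ _ (inner_of (ti _) h0) (inner_of (ti _) hl) hne.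
rewrite -HX in uX tX.
exact: (focus_contra Hsf tX uX hq hr e1 e2).
Qed.

Definition one m : 'I_m.+4 := @Ordinal m.+4 1 isT.
Definition gl m (p a : 'I_m.+4) : {ffun 'I_m.+4 -> 'I_m.+4} :=
  [ffun x => if x == p then a else ord_max].

Lemma iter_max m (g : {ffun 'I_m.+4 -> 'I_m.+4}) k :
  g ord_max = ord_max -> iter k g ord_max = ord_max.
Proof. by move=> h; elim: k => //= k ->. Qed.

Lemma max_ninit m : ~~ is_init (@ord_max m.+3). Proof. by []. Qed.

Lemma gl_max m (p a : 'I_m.+4) : ~~ is_last p -> gl p a ord_max = ord_max.
Proof.
move=> hp; rewrite ffunE; case: eqP => // e.
by move: hp; rewrite -e is_last_max.
Qed.

Lemma gl_inB m (p a : 'I_m.+4) : ~~ is_last p -> ~~ is_init a -> inB (gl p a).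
Proof.
move=> hp ha; split; [|split].
- by move=> q; rewrite ffunE; case: eqP.
- by move=> q hq; rewrite (lastM hq) gl_max.
- move=> j hj p0 q hp0 hq; rewrite (init0 hp0).
  case: j hj => // j _.
  case: (eqVneq (@ord0 m.+3) p) => e.
  + case: j => [|j].
    * rewrite /= !ffunE -e eqxx.
      have -> : (q == ord0) = false by apply/negbTE/inner_nz.
      by case: (boolP (is_last a)) => h; [left|right=> ea; move: h; rewrite ea is_last_max].
    * left.
      have g0 : gl p a ord0 = a by rewrite ffunE -e eqxx.
      have ga : gl p a a = ord_max.
        rewrite ffunE -e; case: eqP => // h; by move: ha; rewrite h.
      by rewrite iterSr iterSr g0 ga iter_max ?gl_max ?is_last_max.
  + left; rewrite iterSr ffunE (negbTE e) iter_max ?gl_max //; exact: is_last_max.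
Qed.

Lemma gl_inV m (p a : 'I_m.+4) : ~~ is_last p -> ~~ is_init a -> gl p a \in Vsf m.+4.
Proof.
move=> hp ha; rewrite inE; apply/asboolP; split; first exact: gl_inB.
move=> x y xy; rewrite !ffunE.
case: (eqVneq x p) => [ex|nx]; case: (eqVneq y p) => [ey|ny].
- by move: xy; rewrite ex ey eqxx.
- case: (boolP (is_last a)) => h; first by left; rewrite is_last_max.
  by right => ea; move: h; rewrite ea is_last_max.
- case: (boolP (is_last a)) => h; first by left; rewrite is_last_max.
  by right => ea; move: h; rewrite -ea is_last_max.
- by left; rewrite is_last_max.
Qed.

Lemma gl_inW m (p a : 'I_m.+4) : ~~ is_last p -> ~~ is_init a -> gl p a \in Wsf m.+4.
Proof.
move=> hp ha; rewrite inE; apply/asboolP; split; first exact: gl_inB.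
case: (eqVneq p ord0) => e.
- right=> q hq; rewrite ffunE e (negbTE (inner_nz hq)); exact: is_last_max.
- left=> q hq; rewrite (init0 hq) ffunE eq_sym (negbTE e); exact: is_last_max.
Qed.

Definition realD m (S : {set {ffun 'I_m.+4 -> 'I_m.+4}}) : dfa m.+4 :=
  @DFA m.+4 #|S| (fun i => enum_val i) [set one m].

Lemma realD_sub m (S : {set {ffun 'I_m.+4 -> 'I_m.+4}}) : S \subset tsg (realD S).
Proof.
apply/subsetP => t tS; rewrite inE; apply/asboolP.
exists [:: enum_rank_in tS t]; split => //.
by apply/ffunP => q; rewrite wtE /= enum_rankK_in.
Qed.

Lemma run_last m (D : dfa m.+4) : (forall a, inB (@delta _ D a)) ->
  forall w q, is_last q -> run D w q = q.
Proof.
move=> hB; elim=> [|a w IH] q hq //.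
by rewrite run_cons; case: (hB a) => _ [h _]; rewrite h // IH.
Qed.

Lemma run_ninit m (D : dfa m.+4) : (forall a, inB (@delta _ D a)) ->
  forall w q, ~~ is_init q -> ~~ is_init (run D w q).
Proof.
move=> hB; elim=> [|a w IH] q hq //.
by rewrite run_cons; apply: IH; case: (hB a).
Qed.

Lemma one_nlast m : ~~ is_last (one m). Proof. by rewrite /is_last /=; case: m. Qed.

Lemma realD_sf m (S : {set {ffun 'I_m.+4 -> 'I_m.+4}}) :
  (forall t, t \in S -> inB t) ->
  (forall p a, ~~ is_last p -> ~~ is_init a -> gl p a \in S) ->
  (forall u p, ~~ is_init p -> run (realD S) u p = one m ->
      run (realD S) u ord0 = one m -> False) ->
  sf_class (realD S).
Proof.
move=> HB Hg Hk.
have hB : forall a, inB (@delta _ (realD S) a) by move=> a; apply: HB; apply: enum_valP.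
have letter : forall t, t \in S -> exists a : 'I_(nletters (realD S)), delta a = t.
  by move=> t tS; exists (enum_rank_in tS t); rewrite /= enum_rankK_in.
have hlast : forall q, is_last q -> q \notin final (realD S).
  move=> q hq; rewrite /= inE; apply/negP => /eqP e.
  by move: (one_nlast m); rewrite -e hq.
split; [split|split].
- move=> p q hp; rewrite (init0 hp).
  case: (eqVneq q ord0) => e; first by exists [::]; rewrite e.
  have hq : ~~ is_init q by apply: contra e => h; rewrite (init0 h).
  have [a ha] := letter _ (Hg ord0 q isT hq).
  by exists [:: a]; rewrite run_cons ha /= ffunE eqxx.
- have key : forall p q : 'I_m.+4, p != q -> ~~ is_last p ->
      exists w, (run (realD S) w p \in final (realD S)) != (run (realD S) w q \in final (realD S)).
    move=> p q pq hp.
    have [a ha] := letter _ (Hg p (one m) hp isT).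
    have qp : (q == p) = false by rewrite eq_sym; apply/negbTE.
    exists [:: a]; rewrite !run_cons ha /= !ffunE eqxx qp.
    by rewrite !inE eqxx -val_eqE.
  move=> p q pq; case: (boolP (is_last p)) => hp; last exact: key.
  have hq : ~~ is_last q.
    by apply: contra pq => hq; rewrite (lastM hp) (lastM hq).
  have qp : q != p by rewrite eq_sym.
  have [w hw] := key q p qp hq.
  by exists w; rewrite eq_sym.
- by move=> q hq w; rewrite (run_last hB _ hq); apply: hlast.
- move=> w u /existsP [p0 /andP [hp0 hw]] /existsP [p1 /andP [hp1 hu]] /suffixP [x ex].
  rewrite (init0 hp0) in hw; rewrite (init0 hp1) in hu.
  rewrite inE in hw hu.
  case: x ex => [|a x] ex; first by rewrite ex.
  exfalso; move: hw; rewrite ex run_cat run_cons => hw.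
  rewrite inE in hu.
  apply: (Hk u (run (realD S) x (delta a ord0))); [|exact/eqP|exact/eqP].
  by apply: run_ninit => //; case: (hB a).
Qed.

Lemma V_inB m t : t \in Vsf m.+4 -> inB t.
Proof. by rewrite inE => /asboolP [h _]. Qed.
Lemma W_inB m t : t \in Wsf m.+4 -> inB t.
Proof. by rewrite inE => /asboolP [h _]. Qed.

Lemma V_key m u (p : 'I_m.+4) : ~~ is_init p ->
  run (realD (Vsf m.+4)) u p = one m -> run (realD (Vsf m.+4)) u ord0 = one m -> False.
Proof.
set D := realD (Vsf m.+4).
have hV : forall c, inV (@delta _ D c).
  by move=> c; have := enum_valP c; rewrite inE => /asboolP.
have hB : forall c, inB (@delta _ D c) by move=> c; case: (hV c).
have inj : forall u a b, run D u a = run D u b -> ~~ is_last (run D u a) -> a = b.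
  elim=> [|c u' IH] a b //.
  rewrite !run_cons => e nl.
  have e2 := IH _ _ e nl.
  case: (eqVneq a b) => // ab.
  case: (hV c) => _ /(_ a b ab) [[la _]|]; last by move/(_ e2).
  by move: nl; rewrite (run_last hB _ la) la.
move=> hp e1 e2.
have := inj u p ord0; rewrite e1 e2 => /(_ erefl (one_nlast m)) ep.
by move: hp; rewrite ep.
Qed.

Lemma W_key m u (p : 'I_m.+4) : ~~ is_init p ->
  run (realD (Wsf m.+4)) u p = one m -> run (realD (Wsf m.+4)) u ord0 = one m -> False.
Proof.
set D := realD (Wsf m.+4).
have hW : forall c, inW (@delta _ D c).
  by move=> c; have := enum_valP c; rewrite inE => /asboolP.
have hB : forall c, inB (@delta _ D c) by move=> c; case: (hW c).
case: u => [|c u] hp e1 e2; first by move: e2 => /(congr1 val).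
move: e1 e2; rewrite !run_cons => e1 e2.
case: (boolP (is_last (delta c ord0))) => h0.
  by move: (one_nlast m); rewrite -e2 (run_last hB _ h0) h0.
case: (hW c) => _ [/(_ ord0 (is_init0 m))|hi]; first by move=> h; move: h0; rewrite h.
case: (state_cases p) => hp'.
- by rewrite hp' in hp.
- by move: (one_nlast m); rewrite -e1 (run_last hB _ (hi _ hp')) hi.
- have := hB c; case=> _ [hl _].
  by move: (one_nlast m); rewrite -e1 hl // (run_last hB _ hp') hp'.
Qed.

Theorem lemma4 (n : nat) (X : {set {ffun 'I_n -> 'I_n}}) :
  4 <= n ->
  (exists D : dfa n, sf_class D /\ tsg D = X) ->
  (forall D : dfa n, sf_class D -> #|tsg D| <= #|X|) ->
  X != Vsf n -> X != Wsf n ->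
  ~ (exists t t', [/\ t \in X, t' \in X & conflict t t']).
Proof.
move=> Hn.
have [m Em] : exists m, n = m.+4 by exists (n - 4); rewrite -addn4 subnK.
subst n.
move=> [D [Hsf HX]] Hmax nV nW [t [t' [tX t'X [_ [_ Hc]]]]].
have Hsf' := Hsf; case: Hsf' => _ [_ Hs].
rewrite -HX in tX t'X.
case: (Hc D tX t'X) => [//|[Hcol|Hfoc]]; rewrite ?HX in Hcol || rewrite ?HX in Hfoc.
- have sub := coll_subV Hsf HX Hcol.
  have Hr := realD_sf (@V_inB m) (@gl_inV m) (@V_key m).
  have c1 := subset_leq_card (realD_sub (Vsf m.+4)).
  have c2 := Hmax _ Hr.
  move: nV; rewrite eqEcard sub /=.
  by rewrite (leq_trans c1 c2).
- have sub := foc_subW Hsf HX Hfoc.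
  have Hr := realD_sf (@W_inB m) (@gl_inW m) (@W_key m).
  have c1 := subset_leq_card (realD_sub (Wsf m.+4)).
  have c2 := Hmax _ Hr.
  move: nW; rewrite eqEcard sub /=.
  by rewrite (leq_trans c1 c2).
Qed.
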